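(* Let $n\ge 1$, identify $\mathbb{R}^{n+1}=\mathbb{R}^n\times\mathbb{R}$, let $f\colon\mathbb{R}^n\to\mathbb{R}$ be continuous with epigraph $L=\{(x,y)\mid f(x)\le y\}$, and let $K\subset\mathbb{R}^{n+1}$ be a nonempty closed set with $K\cap L=\emptyset$. Suppose there is a point $(x_*,y_* )\in K$ such that $y_*<f(x)$ for all $x\in\mathbb{R}^n$. Then for every $x\in\mathbb{R}^n$ there exists $y\in\mathbb{R}$ with $d((x,y),K)=d((x,y),L)$, and every such equidistant point $(x,y)$ satisfies $$\min\left\{\frac{|x-x_*|^2+y_*^2-u^2}{2(y_*-u)},\,y_*\right\}\le y<f(x),\qquad\text{where } u=\min\{f(s)\mid s\in\mathbb{R}^n,\ |x-s|\le|x-x_*|\}.$$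
   Context: For $A\subset\mathbb{R}^{m}$ and $p\in\mathbb{R}^m$, $d(p,A)=\inf\{|p-q|\mid q\in A\}$ with the Euclidean norm. A point $p$ is called equidistant (for $K$ and $L$) if $d(p,K)=d(p,L)$. *)

(* Defs.v *)
(* R : realType, R^n = 'rV[R]_n, R^(n+1) = 'rV[R]_n * R. *)
From HB Require Import structures.
From mathcomp Require Import all_boot all_order all_algebra.
From mathcomp Require Import all_classical all_reals all_analysis.
Set Implicit Arguments. Unset Strict Implicit. Unset Printing Implicit Defensive.
Import Order.TTheory GRing.Theory Num.Theory.
Import numFieldNormedType.Exports.
Local Open Scope ring_scope.
Local Open Scope classical_set_scope.

Definition enorm {R : realType} {n : nat} (x : 'rV[R]_n) : R :=
  Num.sqrt (\sum_(i < n) x ord0 i ^+ 2).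

Definition pdist {R : realType} {n : nat} (p q : 'rV[R]_n * R) : R :=
  Num.sqrt (\sum_(i < n) (p.1 ord0 i - q.1 ord0 i) ^+ 2 + (p.2 - q.2) ^+ 2).

Definition dist_set {R : realType} {n : nat} (p : 'rV[R]_n * R)
  (A : set ('rV[R]_n * R)) : R :=
  inf [set pdist p q | q in A].

Definition epigraph {R : realType} {n : nat} (f : 'rV[R]_n -> R)
  : set ('rV[R]_n * R) := [set p | f p.1 <= p.2].

Definition equidistant {R : realType} {n : nat} (K L : set ('rV[R]_n * R))
  (p : 'rV[R]_n * R) : Prop := dist_set p K = dist_set p L.

(* Main.v *)
From HB Require Import structures.
From mathcomp Require Import all_boot all_order all_algebra.
From mathcomp Require Import all_classical all_reals all_analysis.
From mathcomp Require Import ring lra.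
Set Implicit Arguments. Unset Strict Implicit. Unset Printing Implicit Defensive.
Import Order.TTheory GRing.Theory Num.Theory.
Import numFieldNormedType.Exports.
Local Open Scope ring_scope.
Local Open Scope classical_set_scope.
Require Import Defs.

Lemma box_min (R : realType) n (f : 'rV[R]_n -> R) (hf : continuous f)
  (x : 'rV[R]_n) (rho ys : R) (hys : forall s, ys < f s) :
  exists2 m, ys < m & forall s : 'rV[R]_n, (forall i, `|x ord0 i - s ord0 i| <= rho) -> m <= f s.
Proof.
pose A := fun i => `[x ord0 i - rho, x ord0 i + rho]%classic.
pose B := [set v : 'rV[R]_n | forall i, A i (v ord0 i)].
have cB : compact B by apply: rV_compact => i; exact: segment_compact.
have cfB : compact (f @` B).
  apply: continuous_compact => //; exact: continuous_subspaceT.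
have clB : closed (f @` B) by apply: (compact_closed _ cfB); exact: Rhausdorff.
have /closed_openC := clB.
rewrite openE => /(_ ys).
have nys : (~` (f @` B)) ys.
  move=> hh; case: hh => s _ fs; have := hys s; rewrite fs ltxx //.
move=> /(_ nys) /nbhs_ballP [e /= e0 he].
exists (ys + e); first by rewrite ltrDl.
move=> s hs.
have Bs : B s.
  move=> i; rewrite /A /= in_itv /=; have := hs i.
  rewrite ler_norml => /andP [h1 h2]; apply/andP; split; lra.
rewrite leNgt; apply/negP => hlt.
apply: (he (f s)); last by exists s.
have := hys s => hh.
rewrite /ball /= ltr0_norm; lra.
Qed.
Section S.
Variables (R : realType) (n : nat).
Implicit Types (p q : 'rV[R]_n * R) (A : set ('rV[R]_n * R)).

Lemma pdist_ge0 p q : 0 <= pdist p q.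
Proof. exact: sqrtr_ge0. Qed.

Lemma dist_set_le A p q : A q -> dist_set p A <= pdist p q.
Proof.
move=> Aq; apply: ge_inf; last by exists q.
by exists 0 => _ [r _ <-]; exact: pdist_ge0.
Qed.

Lemma dist_set_ge A p c : A !=set0 -> (forall q, A q -> c <= pdist p q) ->
  c <= dist_set p A.
Proof.
move=> [q Aq] h; apply: lb_le_inf; first by exists (pdist p q), q.
by move=> _ [r Ar <-]; exact: h.
Qed.

Lemma dist_set_ge0 A p : A !=set0 -> 0 <= dist_set p A.
Proof. by move=> A0; apply: dist_set_ge => // q _; exact: pdist_ge0. Qed.

Lemma sum_ge0 (x s : 'rV[R]_n) : 0 <= \sum_(i < n) (x ord0 i - s ord0 i) ^+ 2.
Proof. by apply: sumr_ge0 => i _; exact: sqr_ge0. Qed.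

Lemma pdist_y (x : 'rV[R]_n) y y' q :
  pdist (x, y) q <= pdist (x, y') q + `|y - y'|.
Proof.
rewrite /pdist /=.
set S := \sum_(i < n) _.
have S0 : 0 <= S by exact: sum_ge0.
set T := Num.sqrt (S + (y' - q.2) ^+ 2).
have T0 : 0 <= T by exact: sqrtr_ge0.
have T2 : T ^+ 2 = S + (y' - q.2) ^+ 2 by rewrite sqr_sqrtr // addr_ge0 // sqr_ge0.
have Tb : `|y' - q.2| <= T.
  by rewrite -sqrtr_sqr; apply: ler_wsqrtr; rewrite lerDr.
rewrite -[X in _ <= X]ger0_norm ?addr_ge0 // -sqrtr_sqr.
apply: ler_wsqrtr.
set a := y - q.2; set b := y' - q.2.
have hab : `|a| <= `|b| + `|y - y'|.
  have -> : a = b + (y - y') by rewrite /a /b; ring.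
  exact: ler_normD.
have ea : a ^+ 2 = `|a| ^+ 2 by rewrite real_normK // num_real.
have eb : (y - y') ^+ 2 = `|y - y'| ^+ 2 by rewrite real_normK // num_real.
have a0 := normr_ge0 a; have b0 := normr_ge0 b; have c0 := normr_ge0 (y - y').
have eb2 : b ^+ 2 = `|b| ^+ 2 by rewrite real_normK // num_real.
have h1 : `|a| ^+ 2 <= (`|b| + `|y - y'|) ^+ 2.
  by rewrite ler_sqr ?nnegrE ?addr_ge0.
have h2 : `|b| * `|y - y'| <= T * `|y - y'| by rewrite ler_wpM2r.
have T2' : T ^+ 2 = S + `|b| ^+ 2 by rewrite T2 -eb2.
rewrite ea; move: h1 h2; rewrite !sqrrD T2'; lra.
Qed.

Lemma dist_set_lip A (x : 'rV[R]_n) y y' : A !=set0 ->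
  `|dist_set (x, y) A - dist_set (x, y') A| <= `|y - y'|.
Proof.
move=> A0.
have h : forall y y', dist_set (x, y) A - `|y - y'| <= dist_set (x, y') A.
  move=> z z'; apply: dist_set_ge => // q Aq.
  have := dist_set_le (x, z) Aq; have := pdist_y x z z' q; lra.
rewrite ler_norml; apply/andP; split.
  have := h y' y; rewrite distrC; lra.
have := h y y'; lra.
Qed.

Lemma lip_cont (h : R -> R) : (forall a b, `|h a - h b| <= `|a - b|) -> continuous h.
Proof.
move=> hl t; apply/cvgrPdist_lt => e e0; near=> s.
apply: le_lt_trans (hl t s) _.
near: s; apply/nbhs_ballP; exists e => // z; rewrite /ball /=.
Unshelve. all: end_near.
Qed.


Lemma coord_le (x s : 'rV[R]_n) (i : 'I_n) :
  `|x ord0 i - s ord0 i| <= Num.sqrt (\sum_(j < n) (x ord0 j - s ord0 j) ^+ 2).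
Proof.
rewrite -sqrtr_sqr; apply: ler_wsqrtr.
rewrite (bigD1 i) //= lerDl; apply: sumr_ge0 => j _; exact: sqr_ge0.
Qed.

Lemma coord_sq (x s : 'rV[R]_n) (i : 'I_n) :
  (x ord0 i - s ord0 i) ^+ 2 <= \sum_(j < n) (x ord0 j - s ord0 j) ^+ 2.
Proof.
rewrite (bigD1 i) //= lerDl; apply: sumr_ge0 => j _; exact: sqr_ge0.
Qed.

Lemma pdist_c1 p q (i : 'I_n) : `|p.1 ord0 i - q.1 ord0 i| <= pdist p q.
Proof.
rewrite /pdist -sqrtr_sqr; apply: ler_wsqrtr.
apply: le_trans (coord_sq p.1 q.1 i) _; rewrite lerDl; exact: sqr_ge0.
Qed.

Lemma pdist_c2 p q : `|p.2 - q.2| <= pdist p q.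
Proof.
rewrite /pdist -sqrtr_sqr; apply: ler_wsqrtr.
rewrite lerDr; exact: sum_ge0.
Qed.

Lemma pdist_xx p : pdist p p = 0.
Proof.
rewrite /pdist subrr expr0n /= addr0 big1 ?sqrtr0 // => i _.
by rewrite subrr expr0n.
Qed.

Lemma enormE (x s : 'rV[R]_n) :
  enorm (x - s) = Num.sqrt (\sum_(j < n) (x ord0 j - s ord0 j) ^+ 2).
Proof. by rewrite /enorm; congr Num.sqrt; apply: eq_bigr => i _; rewrite !mxE. Qed.

Lemma dist_pos K p : closed K -> ~ K p -> K !=set0 -> 0 < dist_set p K.
Proof.
move=> cK nKp K0.
have /closed_openC := cK; rewrite openE => /(_ p nKp) /nbhs_ballP [e /= e0 he].
have e0' := e0; apply: lt_le_trans e0' _; apply: dist_set_ge => // q Kq.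
rewrite leNgt; apply/negP => hlt; apply: (he q) => //.
split.
  split => // i0 j; rewrite (ord1 i0) /ball /=.
  exact: le_lt_trans (pdist_c1 p q j) hlt.
rewrite /ball /=; exact: le_lt_trans (pdist_c2 p q) hlt.
Qed.

End S.

Theorem lemma1 (R : realType) (n : nat) (hn : (1 <= n)%N)
  (f : 'rV[R]_n -> R) (hf : continuous f)
  (K : set ('rV[R]_n * R)) (hK0 : K !=set0) (hKc : closed K)
  (hKL : K `&` epigraph f = set0)
  (xs : 'rV[R]_n) (ys : R) (hKs : K (xs, ys))
  (hys : forall x : 'rV[R]_n, ys < f x) :
  (forall x : 'rV[R]_n, exists y : R, equidistant K (epigraph f) (x, y)) /\
  (forall (x : 'rV[R]_n) (y : R), equidistant K (epigraph f) (x, y) ->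
     let u := inf [set f s | s in [set s | enorm (x - s) <= enorm (x - xs)]] in
     Num.min ((enorm (x - xs) ^+ 2 + ys ^+ 2 - u ^+ 2) / (2 * (ys - u))) ys <= y
     /\ y < f x).
Proof.
set L := epigraph f.
have L0 : forall x : 'rV[R]_n, L !=set0 by move=> x; exists (x, f x); rewrite /L /epigraph /=.
have KL : forall p, K p -> L p -> False.
  by move=> p Kp Lp; have : (K `&` L) p by []; rewrite hKL.
split.
- move=> x.
  pose r := \sum_(i < n) (x ord0 i - xs ord0 i) ^+ 2.
  have r0 : 0 <= r by exact: sum_ge0.
  have [m ysm hm] := box_min hf x (1 + r) hys.
  pose Y := r / (2 * (m - ys)).
  have Y0 : 0 <= Y by rewrite /Y divr_ge0 // mulr_ge0 // subr_ge0 ltW.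
  have eY : 2 * Y * (m - ys) = r.
    have hne : m - ys != 0 by rewrite subr_eq0 gt_eqF.
    rewrite /Y; field; exact: hne.
  pose y0 := ys - Y.
  pose g := fun y => dist_set (x, y) K - dist_set (x, y) L.
  have gc : continuous g.
    have c1 : continuous (fun y => dist_set (x, y) K).
      by apply: lip_cont => a b; exact: dist_set_lip.
    have c2 : continuous (fun y => dist_set (x, y) L).
      by apply: lip_cont => a b; apply: dist_set_lip; exact: L0.
    move=> t; exact: (cvgB (c1 t) (c2 t)).
  have g1 : g y0 <= 0.
    rewrite /g subr_le0.
    apply: le_trans (dist_set_le (x, y0) hKs) _.
    apply: dist_set_ge; first exact: L0 x.
    move=> -[s t] Lst.
    rewrite /pdist /= ler_sqrt; last first.
      by apply: addr_ge0; [exact: sum_ge0 | exact: sqr_ge0].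
    have ft : f s <= t by [].
    have yt : ys < t by apply: lt_le_trans (hys s) ft.
    have -> : (y0 - ys) ^+ 2 = Y ^+ 2 by rewrite /y0; ring.
    have [hb|hb] := boolP [forall i, `|x ord0 i - s ord0 i| <= 1 + r].
      have ms := hm s (fun i => (forallP hb) i).
      have S0 := sum_ge0 x s.
      rewrite -/r.
      have mt : m <= t by apply: le_trans ms ft.
      have h : (m - y0) ^+ 2 <= (y0 - t) ^+ 2.
        have -> : (y0 - t) ^+ 2 = (t - y0) ^+ 2 by ring.
        rewrite ler_sqr ?nnegrE; rewrite /y0; lra.
      move: h; rewrite /y0 -eY; nra.
    move: hb; rewrite negb_forall => /existsP [i]; rewrite -ltNge => hi.
    have hsq := coord_sq x s i.
    have hii : (1 + r) ^+ 2 <= (x ord0 i - s ord0 i) ^+ 2.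
      rewrite -[(x ord0 i - s ord0 i) ^+ 2]real_normK ?num_real //.
      rewrite ler_sqr ?nnegrE ?addr_ge0 //; exact: ltW.
    rewrite -/r.
    have : Y ^+ 2 <= (y0 - t) ^+ 2.
      have -> : (y0 - t) ^+ 2 = (t - y0) ^+ 2 by ring.
      rewrite ler_sqr ?nnegrE; rewrite /y0; lra.
    nra.
  have g2 : 0 <= g (f x).
    rewrite /g subr_ge0; apply: le_trans (dist_set_ge0 _ hK0).
    have Lx : L (x, f x) by rewrite /L /epigraph /=.
    by apply: le_trans (dist_set_le (x, f x) Lx) _; rewrite pdist_xx.
  have y0f : y0 <= f x by have := hys x; rewrite /y0; lra.
  have gw : {within `[y0, f x], continuous g} by exact: continuous_subspaceT.
  have hv : Num.min (g y0) (g (f x)) <= 0 <= Num.max (g y0) (g (f x)).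
    apply/andP; split; [rewrite ge_min g1 // | rewrite le_max g2 orbT //].
  have [c _ gc0] := IVT y0f gw hv.
  by exists c; apply/eqP; rewrite -subr_eq0; apply/eqP.
- move=> x y heq u.
  have ylt : y < f x.
    rewrite ltNge; apply/negP => fy.
    have Lp : L (x, y) by [].
    have Kp : ~ K (x, y) by move=> Kp; exact: KL Kp Lp.
    have := dist_pos hKc Kp hK0; rewrite heq.
    have := dist_set_le (x, y) Lp; rewrite pdist_xx; lra.
  split => //.
  pose r := \sum_(i < n) (x ord0 i - xs ord0 i) ^+ 2.
  have r0 : 0 <= r by exact: sum_ge0.
  have er : enorm (x - xs) = Num.sqrt r by rewrite enormE.
  have er2 : enorm (x - xs) ^+ 2 = r by rewrite er sqr_sqrtr.
  rewrite er2.
  have [m ysm hm] := box_min hf x (Num.sqrt r) hys.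
  have ball_box : forall s, enorm (x - s) <= enorm (x - xs) ->
      forall i, `|x ord0 i - s ord0 i| <= Num.sqrt r.
    move=> s hs i; rewrite -er; apply: le_trans hs; rewrite enormE; exact: coord_le.
  have Sne : [set f s | s in [set s | enorm (x - s) <= enorm (x - xs)]] !=set0.
    exists (f x), x => //=.
    rewrite [enorm (x - x)]enormE er big1 ?sqrtr0 ?sqrtr_ge0 // => i _.
    by rewrite subrr expr0n.
  have hu : m <= u.
    apply: lb_le_inf => // _ [s hs <-]; exact: hm (ball_box s hs).
  have hfu : forall s, enorm (x - s) <= enorm (x - xs) -> u <= f s.
    move=> s hs; apply: ge_inf; last by exists s.
    by exists ys => _ [s' _ <-]; exact: ltW.
  have ysu : ys < u by apply: lt_le_trans ysm hu.
  have [yys|yys] := leP ys y.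
    by rewrite ge_min yys orbT.
  suff key : (u - y) ^+ 2 <= r + (ys - y) ^+ 2.
    rewrite ge_min; apply/orP; left.
    rewrite ler_ndivrMr; last by rewrite pmulr_rlt0 // subr_lt0.
    nra.
  rewrite leNgt; apply/negP => hcon.
  pose D2 := r + (ys - y) ^+ 2.
  have D0 : 0 <= D2 by rewrite /D2 addr_ge0 // sqr_ge0.
  have [m' ysm' hm'] := box_min hf x (1 + D2) hys.
  pose c := Num.min ((u - y) ^+ 2) (Num.min (r + (m' - y) ^+ 2) (D2 + 1)).
  have cD : D2 < c.
    rewrite /c !lt_min; apply/and3P; split => //.
      rewrite /D2 ltrD2l; rewrite ltr_sqr ?nnegrE; lra.
    by rewrite ltrDl.
  have hK : dist_set (x, y) K <= Num.sqrt D2.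
    apply: le_trans (dist_set_le (x, y) hKs) _.
    rewrite /pdist /= -/r /D2.
    have -> : (y - ys) ^+ 2 = (ys - y) ^+ 2 by ring.
    exact: lexx.
  have hL : Num.sqrt c <= dist_set (x, y) L.
    apply: dist_set_ge; first exact: L0 x.
    move=> -[s t] Lst.
    rewrite /pdist /= ler_sqrt; last by apply: addr_ge0; [exact: sum_ge0 | exact: sqr_ge0].
    have ft : f s <= t by [].
    have yt : y < t by apply: lt_trans (lt_le_trans (hys s) ft); lra.
    have S0 := sum_ge0 x s.
    have eyt : (y - t) ^+ 2 = (t - y) ^+ 2 by ring.
    rewrite eyt.
    have [hs|hs] := leP (\sum_(i < n) (x ord0 i - s ord0 i) ^+ 2) r.
      have hs' : enorm (x - s) <= enorm (x - xs) by rewrite enormE er ler_sqrt.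
      have us := hfu s hs'.
      have : (u - y) ^+ 2 <= (t - y) ^+ 2 by rewrite ler_sqr ?nnegrE; lra.
      have : c <= (u - y) ^+ 2 by rewrite /c ge_min lexx.
      lra.
    have [hb|hb] := boolP [forall i, `|x ord0 i - s ord0 i| <= 1 + D2].
      have ms := hm' s (fun i => (forallP hb) i).
      have : (m' - y) ^+ 2 <= (t - y) ^+ 2 by rewrite ler_sqr ?nnegrE; lra.
      have : c <= r + (m' - y) ^+ 2 by rewrite /c !ge_min lexx orbT.
      lra.
    move: hb; rewrite negb_forall => /existsP [i]; rewrite -ltNge => hi.
    have hsq := coord_sq x s i.
    have hii : (1 + D2) ^+ 2 <= (x ord0 i - s ord0 i) ^+ 2.
      rewrite -[(x ord0 i - s ord0 i) ^+ 2]real_normK ?num_real //.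
      have := normr_ge0 (x ord0 i - s ord0 i).
      rewrite ler_sqr ?nnegrE; lra.
    have : c <= D2 + 1 by rewrite /c !ge_min lexx !orbT.
    have : 0 <= (t - y) ^+ 2 by exact: sqr_ge0.
    nra.
  move: hL; rewrite -heq => hL.
  have := le_trans hL hK; rewrite ler_sqrt // => /(lt_le_trans cD); rewrite ltxx.
  done.
Qed.
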